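(* For any integers $k \geq r \geq 2$, the optimization problem Two-Class $(r,k)$-Coloring is in APX; in fact, there is a polynomial-time algorithm that, on every input graph $G$, returns a feasible solution covering at least half of the optimum number of covered edges.
   Context: Let $G=(V,E)$ be a finite simple undirected graph. A $k$-coloring is a map from $V$ to a set of $k$ colors; an edge is covered if its endpoints receive different colors. In Two-Class $(r,k)$-Coloring, the $k$ colors are divided into $r$ relaxed colors and $k-r$ proper colors; a feasible solution is a $k$-coloring in which each proper color class is an independent set, and the optimization problem asks to maximize the number of covered edges. APX is the class of NP optimization problems admitting a polynomial-time constant-factor approximation algorithm. *)

(* Defs.v *)
From mathcomp Require Import all_boot.
Set Implicit Arguments. Unset Strict Implicit. Unset Printing Implicit Defensive.

Definition simple_graph (T : finType) (e : rel T) : Prop :=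
  symmetric e /\ irreflexive e.

(* Colors are the naturals 0..k-1; colors c < r are the r relaxed colors,
   colors r <= c < k are the k - r proper colors. *)

Definition feasible (T : finType) (e : rel T) (r : nat) (f : T -> nat) : bool :=
  [forall u, forall v, e u v ==> (f u == f v) ==> (f u < r)].

Definition covered_edges (T : finType) (e : rel T) (f : T -> nat) : {set {set T}} :=
  [set A : {set T} | [exists u, exists v,
      [&& A == [set u; v], e u v & f u != f v]]].

Definition ncovered (T : finType) (e : rel T) (f : T -> nat) : nat :=
  #|covered_edges e f|.

Definition opt_cover (T : finType) (e : rel T) (r k : nat) : nat :=
  \max_(f : {ffun T -> 'I_k} | feasible e r (fun v => val (f v)))
     ncovered e (fun v => val (f v)).

(* The explicit polynomial-time (O(|V|^2)) greedy algorithm: scan vertices in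
   order; give the current vertex relaxed color 1 if strictly more of its
   already-colored neighbours have color 0 than color 1, else color 0. *)
Fixpoint greedy_aux (T : eqType) (e : rel T) (acc : seq (T * nat)) (s : seq T)
    : seq (T * nat) :=
  match s with
  | [::] => acc
  | v :: s' =>
      let n0 := count (fun p => e v p.1 && (p.2 == 0)) acc in
      let n1 := count (fun p => e v p.1 && (p.2 == 1)) acc in
      greedy_aux e ((v, if n1 < n0 then 1 else 0) :: acc) s'
  end.

Definition greedy_coloring (T : finType) (e : rel T) : T -> nat :=
  let acc := greedy_aux e [::] (enum T) in
  fun v => nth 0 (unzip2 acc) (index v (unzip1 acc)).

(* Main.v *)
Require Import Defs.
From mathcomp Require Import all_boot.
Set Implicit Arguments. Unset Strict Implicit. Unset Printing Implicit Defensive.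

Section G.
Variable T : finType.
Variable e : rel T.

Definition lookup (L : seq (T * nat)) v := nth 0 (unzip2 L) (index v (unzip1 L)).

Definition choose2 (n0 n1 : nat) := if n1 < n0 then 1 else 0.

Definition step (acc : seq (T * nat)) v :=
  (v, choose2 (count (fun p => e v p.1 && (p.2 == 0)) acc)
              (count (fun p => e v p.1 && (p.2 == 1)) acc)) :: acc.

Lemma greedy_foldl acc s : greedy_aux e acc s = foldl step acc s.
Proof. by elim: s acc => //= v s IH acc; rewrite IH. Qed.

Lemma keys s acc : exists l, foldl step acc s = l ++ acc /\ unzip1 l = rev s.
Proof.
elim: s acc => [|v s IH] acc /=; first by exists [::].
have [l [-> hl]] := IH (step acc v).
exists (rcons l (v, choose2 (count (fun p => e v p.1 && (p.2 == 0)) acc)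
              (count (fun p => e v p.1 && (p.2 == 1)) acc))).
rewrite -cats1 -catA /=; split=> //. by rewrite rev_cons -cats1 -hl /unzip1 map_cat.
Qed.

Lemma lookup_cat l L v : v \notin unzip1 l -> lookup (l ++ L) v = lookup L v.
Proof.
move=> hv; rewrite /lookup /unzip1 /unzip2 !map_cat -/(unzip1 l) -/(unzip2 l) index_cat (negbTE hv) nth_cat size_map.
by rewrite size_map ltnNge leq_addr /= addKn.
Qed.

Lemma lookup_mem L p : uniq (unzip1 L) -> p \in L -> lookup L p.1 = p.2.
Proof.
elim: L => // q L IH /= /andP [hq hu]; rewrite in_cons => /orP [/eqP -> | hp].
  by rewrite /lookup /= eqxx.
have hpk : p.1 \in unzip1 L by apply: map_f.
have hne : (q.1 == p.1) = false.
  by apply/negbTE; apply: contraNneq hq => ->.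
by rewrite /lookup /= hne /=; apply: IH.
Qed.

Definition s := enum T.
Definition G := lookup (foldl step [::] s).

Lemma G_spec v : G v = choose2
   (count (fun u => e v u && (G u == 0)) (take (index v s) s))
   (count (fun u => e v u && (G u == 1)) (take (index v s) s)).
Proof.
have vs : v \in s by rewrite /s mem_enum.
set s1 := take (index v s) s.
set s2 := drop (index v s).+1 s.
have hs : s = s1 ++ v :: s2.
  by rewrite -{1}(cat_take_drop (index v s) s) (drop_nth v) ?index_mem // nth_index.
have us : uniq s by rewrite /s enum_uniq.
have [lall [hall hkall]] := keys s [::].
have ures : uniq (unzip1 (foldl step [::] s)) by rewrite hall cats0 hkall rev_uniq.
rewrite /G.
set A1 := foldl step [::] s1.
have [l2 [h2 hk2]] := keys s2 (step A1 v).
have [l1 [h1 hk1]] := keys s1 [::].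
have hres : foldl step [::] s = l2 ++ step A1 v.
  by rewrite {1}hs foldl_cat /= h2.
have v2 : v \notin unzip1 l2.
  by rewrite hk2 mem_rev; move: us; rewrite hs cat_uniq /= => /and3P [_ _ /andP [hv _]].
rewrite hres in ures *.
rewrite lookup_cat // {1}/lookup /= eqxx /=.
have key : forall b, count (fun p => e v p.1 && (p.2 == b)) A1 =
    count (fun u => e v u && (lookup (l2 ++ step A1 v) u == b)) s1.
  move=> b.
  rewrite -(eq_in_count (a1 := fun p => e v p.1 && (lookup (l2 ++ step A1 v) p.1 == b))).
    by rewrite /A1 h1 cats0 -(count_rev _ s1) -hk1 count_map.
  move=> p hp /=; rewrite (lookup_mem ures) //.
  by rewrite mem_cat /step in_cons hp !orbT.
by rewrite !key.
Qed.


Lemma G_le1 v : G v <= 1.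
Proof. by rewrite G_spec /choose2; case: ifP. Qed.

Definition ord u v := index u s < index v s.

Lemma count_take v C : count C (take (index v s) s) = count (fun u => ord u v && C u) s.
Proof.
have vs : v \in s by rewrite /s mem_enum.
have us : uniq s by rewrite /s enum_uniq.
set s1 := take (index v s) s.
set s2 := drop (index v s).+1 s.
have hs : s = s1 ++ v :: s2.
  by rewrite -{1}(cat_take_drop (index v s) s) (drop_nth v) ?index_mem // nth_index.
have hsz : size s1 = index v s by rewrite size_take index_mem vs.
have hi : forall u, index u s = index u (s1 ++ v :: s2) by move=> u; rewrite -hs.
rewrite [in RHS]hs count_cat.
have -> : count (fun u => ord u v && C u) (v :: s2) = 0.
  apply/eqP; rewrite -leqn0 leqNgt -has_count; apply/hasPn => u hu.
  rewrite /ord hi index_cat.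
  have -> : (u \in s1) = false.
    apply/negbTE; move: us; rewrite hs cat_uniq => /and3P [_ /hasPn h _].
    by apply: h.
  by rewrite -hsz -ltn_subRL subnn ltn0.
rewrite addn0; apply: eq_in_count => u hu.
by rewrite /ord hi index_cat hu -hsz index_mem hu.
Qed.

Lemma ord_total u v : u != v -> ord u v || ord v u.
Proof.
move=> huv; rewrite /ord -neq_ltn; apply: contra huv => /eqP h.
have us : u \in s by rewrite /s mem_enum.
have vs : v \in s by rewrite /s mem_enum.
by rewrite -(nth_index u us) h nth_index.
Qed.

Lemma ord_irr u : ord u u = false.
Proof. by rewrite /ord ltnn. Qed.

Lemma ord_asym u v : ord u v -> ord v u = false.
Proof. by rewrite /ord => h; apply/negbTE; rewrite -leqNgt ltnW. Qed.

Definition PP (Q : T -> T -> bool) :=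
  [set p : T * T | [&& e p.1 p.2, ord p.1 p.2 & Q p.1 p.2]].
Definition mk (p : T * T) : {set T} := [set p.1; p.2].

Lemma card_PP Q : #|PP Q| = \sum_v count (fun u => [&& e u v, ord u v & Q u v]) s.
Proof.
rewrite -sum1_card big_mkcond /=.
rewrite (eq_bigr (fun p : T * T => nat_of_bool ([&& e p.1 p.2, ord p.1 p.2 & Q p.1 p.2]))); last first.
  by move=> p _; rewrite inE; case: ifP.
rewrite -(pair_big xpredT xpredT (fun u v => nat_of_bool [&& e u v, ord u v & Q u v])) /=.
rewrite exchange_big /=; apply: eq_bigr => v _.
rewrite -sum1_count /s big_enum_cond [RHS]big_mkcond /=.
by apply: eq_bigr => u _; case: ifP.
Qed.

Hypothesis hsym : symmetric e.
Hypothesis hirr : irreflexive e.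

Lemma cover_sub (f : T -> nat) :
  covered_edges e f \subset mk @: PP (fun u v => f u != f v).
Proof.
apply/subsetP => A; rewrite inE => /existsP [u /existsP [v /and3P [/eqP -> euv fuv]]].
have huv : u != v by apply: contraTneq euv => ->; rewrite hirr.
case/orP: (ord_total huv) => ho.
  by apply/imsetP; exists (u, v) => //; rewrite inE /= euv ho fuv.
apply/imsetP; exists (v, u); first by rewrite inE /= hsym euv ho eq_sym fuv.
by rewrite /mk /= setUC.
Qed.

Lemma ncov_le f : ncovered e f <= #|PP (fun u v => f u != f v)|.
Proof. exact: leq_trans (subset_leq_card (cover_sub f)) (leq_imset_card _ _). Qed.

Lemma mk_inj Q : {in PP Q &, injective mk}.
Proof.
move=> [a b] [c d]; rewrite !inE /= /mk => /and3P [_ hab _] /and3P [_ hcd _] h.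
have ha : a \in [set c; d] by rewrite -h !inE eqxx.
have hb : b \in [set c; d] by rewrite -h !inE eqxx orbT.
have hc : c \in [set a; b] by rewrite h !inE eqxx.
move: ha hb hc; rewrite !inE => /orP [] /eqP ha /orP [] /eqP hb /orP [] /eqP hc; subst.
all: try by [].
all: try by rewrite ord_irr in hab.
all: try by rewrite ord_irr in hcd.
all: by rewrite (ord_asym hab) in hcd.
Qed.

Lemma ncov_ge f : #|PP (fun u v => f u != f v)| <= ncovered e f.
Proof.
rewrite -(card_in_imset (@mk_inj _)); apply: subset_leq_card.
apply/subsetP => A /imsetP [[u v]]; rewrite inE /= => /and3P [euv _ fuv] ->.
rewrite inE; apply/existsP; exists u; apply/existsP; exists v.
by rewrite eqxx euv fuv.
Qed.

End G.

Lemma count_split (X : Type) (a b : pred X) l :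
  count a l = count (fun x => a x && b x) l + count (fun x => a x && ~~ b x) l.
Proof.
elim: l => //= x l IH; rewrite IH.
by case: (a x); case: (b x); rewrite /= ?add0n ?add1n ?addSn ?addnS.
Qed.

Lemma greedy_G (T : finType) (e : rel T) : greedy_coloring e = G e.
Proof. by rewrite /greedy_coloring greedy_foldl. Qed.

Lemma per_vertex (T : finType) (e : rel T) (hsym : symmetric e) (v : T) :
  count (fun u => [&& e u v, ord u v & G e u == G e v]) (s T) <=
  count (fun u => [&& e u v, ord u v & G e u != G e v]) (s T).
Proof.
have E R : count (fun u => [&& e u v, ord u v & R u]) (s T) =
           count (fun u => e v u && R u) (take (index v (s T)) (s T)).
  rewrite count_take; apply: eq_count => u; rewrite hsym.
  by case: (e v u); case: (ord u v).
rewrite (E (fun u => G e u == G e v)) (E (fun u => G e u != G e v)).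
have h1 u : (G e u != 1) = (G e u == 0).
  by move: (G_le1 e u); case: (G e u) => [|[|]].
have h0 u : (G e u != 0) = (G e u == 1).
  by move: (G_le1 e u); case: (G e u) => [|[|]].
have gs := G_spec e v; rewrite /choose2 in gs.
case: ifP gs => h gs; rewrite gs.
  rewrite [X in _ <= X](eq_count (a2 := fun u => e v u && (G e u == 0))); first exact: ltnW.
  by move=> u; rewrite h1.
rewrite [X in _ <= X](eq_count (a2 := fun u => e v u && (G e u == 1))); first by rewrite leqNgt h.
by move=> u; rewrite h0.
Qed.

Theorem mainTheorem6 (r k : nat) (T : finType) (e : rel T) :
  2 <= r -> r <= k -> simple_graph e ->
  (forall v, greedy_coloring e v < k) /\
  feasible e r (greedy_coloring e) /\
  opt_cover e r k <= 2 * ncovered e (greedy_coloring e).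
Proof.
move=> h2r hrk [hsym hirr]; rewrite greedy_G.
have hr u : G e u < r by apply: leq_trans h2r; rewrite ltnS G_le1.
split; first by move=> v; apply: leq_trans (hr v) hrk.
split.
  by apply/forallP => u; apply/forallP => v; apply/implyP => _; apply/implyP => _.
apply: leq_trans (_ : _ <= #|PP e (fun _ _ => true)|) _.
  apply/bigmax_leqP => f _; apply: leq_trans (ncov_le hsym hirr _) _.
  by apply: subset_leq_card; apply/subsetP => p; rewrite !inE => /and3P [-> -> _].
have hs : #|PP e (fun _ _ => true)| =
   #|PP e (fun u v => G e u == G e v)| + #|PP e (fun u v => G e u != G e v)|.
  rewrite !card_PP -big_split /=; apply: eq_bigr => v _.
  rewrite (count_split _ (fun u => G e u == G e v)).
  by congr (_ + _); apply: eq_count => u; case: (e u v); case: (ord u v).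
have hle : #|PP e (fun u v => G e u == G e v)| <= #|PP e (fun u v => G e u != G e v)|.
  by rewrite !card_PP; apply: leq_sum => v _; apply: per_vertex.
have hge := @ncov_ge _ e (G e).
rewrite hs mul2n -addnn; apply: leq_add; exact: leq_trans hge.
Qed.
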